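(* Let $\mathbf{a}\in\mathbb{C}^n$, $\beta>0$ and $f(\mathbf{z})=\frac12|\mathbf{a}^*\mathbf{z}|^2+\frac{\beta}{2}\|\mathbf{z}\|_4^4$ on $\mathbb{CS}^{n-1}$. Suppose $\mathbf{z},\mathbf{y}\in\mathbb{CS}^{n-1}$ are two consistent local minimizers of $f$ on $\mathbb{CS}^{n-1}$ with $\mathbf{a}^*\mathbf{z}\neq0$ and $\mathbf{a}^*\mathbf{y}\neq0$. Then $|y_k|=|z_k|$ for all $k\in[n]$.
   Context: $\mathbb{CS}^{n-1}=\{\mathbf{z}\in\mathbb{C}^n:\|\mathbf{z}\|_2=1\}$. A stationary point $\mathbf{z}$ (i.e. $(\mathbf{a}^*\mathbf{z})\mathbf{a}+2\beta\,\mathrm{diag}(|z_1|^2,\dots,|z_n|^2)\mathbf{z}=2\lambda\mathbf{z}$ with $2\lambda=|\mathbf{a}^*\mathbf{z}|^2+2\beta\|\mathbf{z}\|_4^4$) is called consistent if $\bar a_kz_k\in\mathbb{R}$ for all $k$ with $a_k\neq0$ and $z_k\in\mathbb{R}$ for all $k$ with $a_k=0$. *)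

(* Defs.v *)
From HB Require Import structures.
From mathcomp Require Import all_boot all_order all_algebra.
From mathcomp Require Import complex.
From mathcomp Require Import reals.
Set Implicit Arguments. Unset Strict Implicit. Unset Printing Implicit Defensive.
Import Order.TTheory GRing.Theory Num.Theory.
Local Open Scope ring_scope.
Local Open Scope complex_scope.

Section Defs.
Variables (R : realType) (n : nat).
Implicit Types (a z w : 'I_n -> R[i]).

Definition cabs (x : R[i]) : R := Normc.normc x.

Definition cinner a z : R[i] := \sum_(k < n) (a k)^* * z k.

Definition norm2sq z : R := \sum_(k < n) cabs (z k) ^+ 2.
Definition norm4pow4 z : R := \sum_(k < n) cabs (z k) ^+ 4.

Definition csphere z : Prop := norm2sq z = 1.

Definition fobj a (beta : R) z : R :=
  2^-1 * cabs (cinner a z) ^+ 2 + beta / 2 * norm4pow4 z.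

Definition local_min_on_sphere a (beta : R) z : Prop :=
  csphere z /\
  exists eps : R, 0 < eps /\
    forall w, csphere w -> norm2sq (fun k => w k - z k) < eps ^+ 2 ->
      fobj a beta z <= fobj a beta w.

(* stationary point: (a^* z) a + 2 beta diag(|z_k|^2) z = 2 lambda z,
   with 2 lambda = |a^* z|^2 + 2 beta ||z||_4^4 (componentwise) *)
Definition stationary a (beta : R) z : Prop :=
  forall k : 'I_n,
    cinner a z * a k + (2 * beta * cabs (z k) ^+ 2)%:C * z k =
    (cabs (cinner a z) ^+ 2 + 2 * beta * norm4pow4 z)%:C * z k.

Definition consistent a (beta : R) z : Prop :=
  stationary a beta z /\
  forall k : 'I_n,
    (a k != 0 -> Im ((a k)^* * z k) = 0) /\ (a k = 0 -> Im (z k) = 0).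

End Defs.

(* Main.v *)
Require Import Defs.
From HB Require Import structures.
From mathcomp Require Import all_boot all_order all_algebra.
From mathcomp Require Import complex.
From mathcomp Require Import reals.
From mathcomp Require Import ring lra.
Import Order.TTheory GRing.Theory Num.Theory.
Local Open Scope ring_scope.
Local Open Scope complex_scope.

Section Conv.
Variable R : realType.

Lemma ReM (x y : R[i]) : complex.Re (x * y) = complex.Re x * complex.Re y - complex.Im x * complex.Im y.
Proof. by case: x => ? ?; case: y => ? ? /=. Qed.
Lemma ImM (x y : R[i]) : complex.Im (x * y) = complex.Re x * complex.Im y + complex.Im x * complex.Re y.
Proof. by case: x => ? ?; case: y => ? ? /=. Qed.
Lemma ReD (x y : R[i]) : complex.Re (x + y) = complex.Re x + complex.Re y.
Proof. by case: x => ? ?; case: y => ? ? /=. Qed.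
Lemma ImD (x y : R[i]) : complex.Im (x + y) = complex.Im x + complex.Im y.
Proof. by case: x => ? ?; case: y => ? ? /=. Qed.
Lemma ReB (x y : R[i]) : complex.Re (x - y) = complex.Re x - complex.Re y.
Proof. by case: x => ? ?; case: y => ? ? /=. Qed.
Lemma ImB (x y : R[i]) : complex.Im (x - y) = complex.Im x - complex.Im y.
Proof. by case: x => ? ?; case: y => ? ? /=. Qed.
Lemma ReJ (x : R[i]) : complex.Re (x^*) = complex.Re x.
Proof. by case: x. Qed.
Lemma ImJ (x : R[i]) : complex.Im (x^*) = - complex.Im x.
Proof. by case: x. Qed.
Lemma ReC (r : R) : complex.Re (r%:C) = r. Proof. by []. Qed.
Lemma ImC (r : R) : complex.Im (r%:C) = 0. Proof. by []. Qed.
Lemma ReS n (F : 'I_n -> R[i]) : complex.Re (\sum_(k < n) F k) = \sum_(k < n) complex.Re (F k).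
Proof. by elim/big_rec2: _ => // k y1 y2 _ <-; rewrite ReD. Qed.
Lemma ImS n (F : 'I_n -> R[i]) : complex.Im (\sum_(k < n) F k) = \sum_(k < n) complex.Im (F k).
Proof. by elim/big_rec2: _ => // k y1 y2 _ <-; rewrite ImD. Qed.
Lemma cabs2 (x : R[i]) : cabs x ^+ 2 = complex.Re x ^+ 2 + complex.Im x ^+ 2.
Proof. case: x => u v; rewrite /cabs /Normc.normc /= sqr_sqrtr //. by rewrite addr_ge0 // sqr_ge0. Qed.
Lemma cabs_ge0 (x : R[i]) : 0 <= cabs x.
Proof. case: x => u v; rewrite /cabs /Normc.normc /=; exact: sqrtr_ge0. Qed.
Lemma ReJn (x : R[i]) : complex.Re (Num.conj x) = complex.Re x.
Proof. by case: x. Qed.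
Lemma ImJn (x : R[i]) : complex.Im (Num.conj x) = - complex.Im x.
Proof. by case: x. Qed.
Lemma ReCM (r : R) (x : R[i]) : complex.Re (r%:C * x) = r * complex.Re x.
Proof. by rewrite ReM ReC ImC mul0r subr0. Qed.
Lemma ImCM (r : R) (x : R[i]) : complex.Im (r%:C * x) = r * complex.Im x.
Proof. by rewrite ImM ReC ImC mul0r addr0. Qed.
End Conv.

Section Real.
Variables (R : realType) (n : nat) (a : 'I_n -> R[i]) (beta : R).

Definition re (z : 'I_n -> R[i]) k := complex.Re (z k).
Definition im (z : 'I_n -> R[i]) k := complex.Im (z k).
Definition Din z := \sum_(k < n) (re a k * re z k + im a k * im z k).
Definition Ein z := \sum_(k < n) (re a k * im z k - im a k * re z k).
Definition r2 z k := re z k ^+ 2 + im z k ^+ 2.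
Definition lam z := 2^-1 * (Din z ^+ 2 + Ein z ^+ 2) + beta * \sum_(k < n) r2 z k ^+ 2.
Definition edot z v k := re z k * re v k + im z k * im v k.
Definition Aform z v := 2^-1 * (Din v ^+ 2 + Ein v ^+ 2)
  + \sum_(k < n) (beta * r2 z k - lam z) * r2 v k
  + 2 * beta * \sum_(k < n) edot z v k ^+ 2.

Lemma cinner_re z : complex.Re (cinner a z) = Din z.
Proof.
rewrite /cinner ReS; apply: eq_bigr => k _.
by rewrite ReM ReJn ImJn /re /im; ring.
Qed.
Lemma cinner_im z : complex.Im (cinner a z) = Ein z.
Proof.
rewrite /cinner ImS; apply: eq_bigr => k _.
by rewrite ImM ReJn ImJn /re /im; ring.
Qed.
Lemma cabs_inner z : cabs (cinner a z) ^+ 2 = Din z ^+ 2 + Ein z ^+ 2.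
Proof. by rewrite cabs2 cinner_re cinner_im. Qed.
Lemma norm2sqE z : norm2sq z = \sum_(k < n) r2 z k.
Proof. by apply: eq_bigr => k _; rewrite cabs2. Qed.
Lemma norm4E z : norm4pow4 z = \sum_(k < n) r2 z k ^+ 2.
Proof. by apply: eq_bigr => k _; rewrite /r2 /re /im -cabs2 -exprM. Qed.
Lemma fobjE z : fobj a beta z =
  2^-1 * (Din z ^+ 2 + Ein z ^+ 2) + beta / 2 * \sum_(k < n) r2 z k ^+ 2.
Proof. by rewrite /fobj cabs_inner norm4E. Qed.

Lemma stat_re z : stationary a beta z -> forall k,
  Din z * re a k - Ein z * im a k + 2 * beta * r2 z k * re z k =
  (Din z ^+ 2 + Ein z ^+ 2 + 2 * beta * \sum_(k < n) r2 z k ^+ 2) * re z k.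
Proof.
move=> st k; have := congr1 (@complex.Re R) (st k).
rewrite ReD ReCM ReM ReCM cabs_inner cinner_re cinner_im cabs2 norm4E.
by rewrite /r2 /re /im; apply.
Qed.
Lemma stat_im z : stationary a beta z -> forall k,
  Din z * im a k + Ein z * re a k + 2 * beta * r2 z k * im z k =
  (Din z ^+ 2 + Ein z ^+ 2 + 2 * beta * \sum_(k < n) r2 z k ^+ 2) * im z k.
Proof.
move=> st k; have := congr1 (@complex.Im R) (st k).
rewrite ImD ImCM ImM ImCM cabs_inner cinner_re cinner_im cabs2 norm4E.
by rewrite /r2 /re /im; apply.
Qed.

Lemma sum_lin3 (F G H : 'I_n -> R) (x y u : R) :
  \sum_(k < n) (F k * x + G k * y + H k * u) =
  (\sum_(k < n) F k) * x + (\sum_(k < n) G k) * y + (\sum_(k < n) H k) * u.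
Proof. by rewrite !big_split /= !mulr_suml. Qed.

Lemma sum_lin5 (F G H I J : 'I_n -> R) (x y u w q : R) :
  \sum_(k < n) (F k * x + G k * y + H k * u + I k * w + J k * q) =
  (\sum_(k < n) F k) * x + (\sum_(k < n) G k) * y + (\sum_(k < n) H k) * u
  + (\sum_(k < n) I k) * w + (\sum_(k < n) J k) * q.
Proof. by rewrite !big_split /= !mulr_suml. Qed.

Lemma poly_id (t D0 D1 E0 E1 S0 S1 S2 S3 S4 S5 V N c0 : R) :
  N = 1 + t ^+ 2 * V -> c0 = D0 ^+ 2 + E0 ^+ 2 ->
  2^-1 * ((D0 + t * D1) ^+ 2 + (E0 + t * E1) ^+ 2) * N
  + beta / 2 * (S0 + 4 * t * S1 + t ^+ 2 * (4 * S2 + 2 * S3) + 4 * t ^+ 3 * S4 + t ^+ 4 * S5)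
  - (2^-1 * c0 + beta / 2 * S0) * N ^+ 2 =
  t * (D0 * D1 + E0 * E1 + 2 * beta * S1)
  + t ^+ 2 * (2^-1 * (D1 ^+ 2 + E1 ^+ 2) + beta * S3
               - (2^-1 * c0 + beta * S0) * V + 2 * beta * S2)
  + t ^+ 3 * ((D0 * D1 + E0 * E1) * V + 2 * beta * S4)
  + t ^+ 4 * (2^-1 * (D1 ^+ 2 + E1 ^+ 2) * V + beta / 2 * S5
               - (2^-1 * c0 + beta / 2 * S0) * V ^+ 2).
Proof. by move=> -> ->; field. Qed.

Definition L2 z := Din z ^+ 2 + Ein z ^+ 2 + 2 * beta * \sum_(k < n) r2 z k ^+ 2.

Lemma X0_lemma z v : stationary a beta z -> \sum_(k < n) edot z v k = 0 ->
  Din z * Din v + Ein z * Ein v + 2 * beta * \sum_(k < n) (r2 z k * edot z v k) = 0.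
Proof.
move=> st tang.
rewrite [Din v]/Din [Ein v]/Ein !mulr_sumr -!big_split /=.
rewrite (eq_bigr (fun k => L2 z * edot z v k)); first by rewrite -mulr_sumr tang mulr0.
move=> k _; have h1 := @stat_re z st k; have h2 := @stat_im z st k.
have e1 := congr1 (fun x => x * re v k) h1.
have e2 := congr1 (fun x => x * im v k) h2.
move: e1 e2; rewrite /L2 /edot /= => e1 e2.
lra.
Qed.
Lemma sum_lin2 (F G : 'I_n -> R) (x y : R) :
  \sum_(k < n) (F k * x + G k * y) = (\sum_(k < n) F k) * x + (\sum_(k < n) G k) * y.
Proof. by rewrite !big_split /= !mulr_suml. Qed.

Lemma sum_lin6 (F G H I J K : 'I_n -> R) (x y u w q p : R) :
  \sum_(k < n) (F k * x + G k * y + H k * u + I k * w + J k * q + K k * p) =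
  (\sum_(k < n) F k) * x + (\sum_(k < n) G k) * y + (\sum_(k < n) H k) * u
  + (\sum_(k < n) I k) * w + (\sum_(k < n) J k) * q + (\sum_(k < n) K k) * p.
Proof. by rewrite !big_split /= !mulr_suml. Qed.

Lemma r2_ge0 z k : 0 <= r2 z k.
Proof. by rewrite /r2 addr_ge0 ?sqr_ge0. Qed.

Lemma second_order z v : 0 < beta -> local_min_on_sphere a beta z ->
  stationary a beta z ->
  \sum_(k < n) edot z v k = 0 -> 0 <= Aform z v.
Proof.
move=> bpos [sphz [eps [epos Hmin]]] st tang.
have sph : \sum_(k < n) r2 z k = 1 by rewrite -norm2sqE.
have X0 := @X0_lemma z v st tang.
rewrite leNgt; apply/negP => Aneg.
pose V := \sum_(k < n) r2 v k.
pose S0 := \sum_(k < n) r2 z k ^+ 2.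
pose S1 := \sum_(k < n) (r2 z k * edot z v k).
pose S2 := \sum_(k < n) edot z v k ^+ 2.
pose S3 := \sum_(k < n) (r2 z k * r2 v k).
pose S4 := \sum_(k < n) (edot z v k * r2 v k).
pose S5 := \sum_(k < n) r2 v k ^+ 2.
pose D0 := Din z. pose E0 := Ein z. pose D1 := Din v. pose E1 := Ein v.
pose c0 := D0 ^+ 2 + E0 ^+ 2.
pose A := Aform z v.
pose B := (D0 * D1 + E0 * E1) * V + 2 * beta * S4.
pose C := 2^-1 * (D1 ^+ 2 + E1 ^+ 2) * V + beta / 2 * S5
          - (2^-1 * c0 + beta / 2 * S0) * V ^+ 2.
have V0 : 0 <= V by apply: sumr_ge0 => k _; exact: r2_ge0.
have AE : A = 2^-1 * (D1 ^+ 2 + E1 ^+ 2) + beta * S3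
               - (2^-1 * c0 + beta * S0) * V + 2 * beta * S2.
  rewrite /A /Aform.
  rewrite (eq_bigr (fun k => (r2 z k * r2 v k) * beta + r2 v k * (- lam z))); last first.
    by move=> k _; ring.
  rewrite sum_lin2 /lam -/S3 -/V -/S2 -/S0 /c0 /D0 /E0 /D1 /E1; ring.
pose M := `|B| + `|C| + 1.
have M0 : 0 < M by rewrite /M ltr_pwDr // addr_ge0.
pose K := 1 + 2 * M / (- A) + 2 * (V + 1) / eps.
have nA : 0 < - A by rewrite oppr_gt0.
have K1 : 2 * M / (- A) >= 0 by apply: divr_ge0; lra.
have K2 : 2 * (V + 1) / eps >= 0 by apply: divr_ge0; lra.
have K0 : 0 < K by rewrite /K; lra.
pose t := K^-1.
have t0 : 0 < t by rewrite /t invr_gt0.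
have tK : t * K = 1 by rewrite /t mulVf // gt_eqF.
have K1p : 1 <= K by rewrite /K; lra.
have t1 : t <= 1 by nra.
have tA : t * (2 * M) <= - A.
  have h : t * (2 * M / (- A)) <= t * K.
    by apply: ler_wpM2l; [exact: ltW | rewrite /K; lra].
  rewrite tK in h.
  have -> : t * (2 * M) = t * (2 * M / (- A)) * (- A)  by field; rewrite lt_eqF.
  by rewrite -[X in _ <= X]mul1r ler_wpM2r // ltW.
have te : t * (2 * (V + 1)) <= eps.
  have h : t * (2 * (V + 1) / eps) <= t * K.
    by apply: ler_wpM2l; [exact: ltW | rewrite /K; lra].
  rewrite tK in h.
  have -> : t * (2 * (V + 1)) = t * (2 * (V + 1) / eps) * eps by field; rewrite gt_eqF.
  by rewrite -[X in _ <= X]mul1r ler_wpM2r // ltW.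
pose N := 1 + t ^+ 2 * V.
have N1 : 1 <= N by rewrite /N ler_wpDr // mulr_ge0 // sqr_ge0.
pose s := Num.sqrt N.
have s0 : 0 < s by rewrite /s sqrtr_gt0; lra.
have sN : s ^+ 2 = N by rewrite /s sqr_sqrtr //; lra.
have s1 : 1 <= s by nra.
pose w := fun k => ((re z k + t * re v k) / s) +i* ((im z k + t * im v k) / s).
pose q := fun k => (re z k + t * re v k) ^+ 2 + (im z k + t * im v k) ^+ 2.
have qE : forall k, q k = r2 z k * 1 + edot z v k * (2 * t) + r2 v k * t ^+ 2.
  by move=> k; rewrite /q /r2 /edot; ring.
have Qs : \sum_(k < n) q k = N.
  by rewrite (eq_bigr _ (fun k _ => qE k)) sum_lin3 sph tang -/V /N; ring.
have wsph : csphere w.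
  rewrite /csphere norm2sqE.
  rewrite (eq_bigr (fun k => q k * N^-1)); last first.
    move=> k _; rewrite /r2 /re /im /= /q -sN; field; exact: lt0r_neq0.
  by rewrite -mulr_suml Qs mulfV // gt_eqF // (lt_le_trans ltr01 N1).
have sne : s != 0 by exact: lt0r_neq0.
have Nne : N != 0 by rewrite -sN expf_neq0.
have dist : norm2sq (fun k => w k - z k) < eps ^+ 2.
  rewrite norm2sqE.
  rewrite (eq_bigr (fun k => q k * (s ^+ 2)^-1 + r2 z k * (1 - 2 / s)
                             + edot z v k * (- 2 * t / s))); last first.
    by move=> k _; rewrite /r2 /re /im /= !ReB !ImB /q /edot /re /im /=; field.
  rewrite sum_lin3 Qs sph tang -sN mulfV ?expf_neq0 // mul0r addr0.
  pose u := s^-1.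
  have su : s * u = 1 by rewrite /u mulfV.
  have u0 : 0 < u by rewrite /u invr_gt0.
  rewrite -/u mul1r.
  have h1 : 2 - 2 * u <= 2 * (s ^+ 2 - 1) by nra.
  have te2 : (t * (2 * (V + 1))) ^+ 2 <= eps ^+ 2.
    by rewrite ler_pXn2r // ?nnegrE ?ltW // mulr_gt0 // mulr_gt0 // ltr_pwDr.
  have h2 : 2 * (s ^+ 2 - 1) < eps ^+ 2.
    rewrite sN /N.
    have : 0 < t ^+ 2 by rewrite exprn_gt0.
    nra.
  lra.
have Dw : Din w = (D0 + t * D1) / s.
  rewrite /Din (eq_bigr (fun k => (re a k * re z k + im a k * im z k) * s^-1
      + (re a k * re v k + im a k * im v k) * (t / s))); last first.
    by move=> k _; rewrite /re /im /=; field.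
  by rewrite sum_lin2 -/(Din z) -/(Din v) -/D0 -/D1; field.
have Ew : Ein w = (E0 + t * E1) / s.
  rewrite /Ein (eq_bigr (fun k => (re a k * im z k - im a k * re z k) * s^-1
      + (re a k * im v k - im a k * re v k) * (t / s))); last first.
    by move=> k _; rewrite /re /im /=; field.
  by rewrite sum_lin2 -/(Ein z) -/(Ein v) -/E0 -/E1; field.
have r2w : forall k, r2 w k = q k / N.
  by move=> k; rewrite /r2 /re /im /= /q -sN; field.
have Q4 : \sum_(k < n) q k ^+ 2 = S0 + 4 * t * S1 + t ^+ 2 * (4 * S2 + 2 * S3)
                                   + 4 * t ^+ 3 * S4 + t ^+ 4 * S5.
  rewrite (eq_bigr (fun k => r2 z k ^+ 2 * 1 + (r2 z k * edot z v k) * (4 * t)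
     + edot z v k ^+ 2 * (4 * t ^+ 2) + (r2 z k * r2 v k) * (2 * t ^+ 2)
     + (edot z v k * r2 v k) * (4 * t ^+ 3) + r2 v k ^+ 2 * t ^+ 4)); last first.
    by move=> k _; rewrite qE; ring.
  by rewrite sum_lin6 -/S0 -/S1 -/S2 -/S3 -/S4 -/S5; ring.
have fw : fobj a beta w * N ^+ 2 = 2^-1 * ((D0 + t * D1) ^+ 2 + (E0 + t * E1) ^+ 2) * N
   + beta / 2 * (S0 + 4 * t * S1 + t ^+ 2 * (4 * S2 + 2 * S3) + 4 * t ^+ 3 * S4 + t ^+ 4 * S5).
  rewrite fobjE Dw Ew (eq_bigr (fun k => q k ^+ 2 * (N ^+ 2)^-1)); last first.
    by move=> k _; rewrite r2w; field.
  by rewrite -mulr_suml Q4 -sN; field.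
have fz : fobj a beta z = 2^-1 * c0 + beta / 2 * S0 by rewrite fobjE.
have P := poly_id t D0 D1 E0 E1 S0 S1 S2 S3 S4 S5 V N c0 (erefl N) (erefl c0).
rewrite -/S1 in X0.
have key : A + t * B + t ^+ 2 * C < 0.
  have h1 : t * B <= t * `|B| by apply: ler_wpM2l; [exact: ltW | exact: ler_norm].
  have h2 : t ^+ 2 * C <= t ^+ 2 * `|C| by apply: ler_wpM2l; [exact: sqr_ge0 | exact: ler_norm].
  have h3 : t ^+ 2 * `|C| <= t * `|C|.
    by apply: ler_wpM2r; [exact: normr_ge0 | rewrite expr2; nra].
  move: tA; rewrite /M; lra.
have neg : (fobj a beta w - fobj a beta z) * N ^+ 2 < 0.
  rewrite mulrBl fw fz P X0 mulr0 add0r -AE -/B -/C.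
  have -> : t ^+ 2 * A + t ^+ 3 * B + t ^+ 4 * C = t ^+ 2 * (A + t * B + t ^+ 2 * C) by ring.
  by rewrite pmulr_rlt0 // exprn_gt0.
have := Hmin w wsph dist.
rewrite -subr_ge0 => hge.
have : 0 <= (fobj a beta w - fobj a beta z) * N ^+ 2 by rewrite mulr_ge0 // sqr_ge0.
lra.
Qed.

Lemma decomp (ar ai zr zi wr wi al th : R) : zr ^+ 2 + zi ^+ 2 != 0 ->
  ar * zi - ai * zr = 0 ->
  al = (wr * zr + wi * zi) / (zr ^+ 2 + zi ^+ 2) ->
  th = (wi * zr - wr * zi) / (zr ^+ 2 + zi ^+ 2) ->
  [/\ ar * wr + ai * wi = ar * (al * zr) - ai * (- (al * zi)),
      ar * wi - ai * wr = ar * (th * zr) - ai * (- (th * zi)),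
      ar * (- (al * zi)) + ai * (al * zr) = 0,
      ar * (- (th * zi)) + ai * (th * zr) = 0 &
      wr ^+ 2 + wi ^+ 2 = ((- (al * zi)) ^+ 2 + (al * zr) ^+ 2)
                          + ((- (th * zi)) ^+ 2 + (th * zr) ^+ 2)].
Proof.
move=> nz hc hal hth.
have hw1 : wr = al * zr - th * zi by rewrite hal hth; field.
have hw2 : wi = al * zi + th * zr by rewrite hal hth; field.
have c1 := congr1 (fun x => al * x) hc.
have c2 := congr1 (fun x => th * x) hc.
move: c1 c2 => /= c1 c2.
rewrite hw1 hw2; split; lra.
Qed.

Lemma cons_re z : consistent a beta z -> forall k, re a k * im z k - im a k * re z k = 0.
Proof.
move=> [_ hc] k; have [h1 h2] := hc k.
rewrite /re /im.
have [->|anz] := eqVneq (a k) 0; first by rewrite /=; ring.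
have := h1 anz; rewrite -complexIm => /complexI.
by rewrite ImM ReJn ImJn => <-; ring.
Qed.

Lemma Ein0 z : consistent a beta z -> Ein z = 0.
Proof.
move=> hc; rewrite /Ein big1 // => k _.
by have := @cons_re z hc k; lra.
Qed.

Lemma Din_neq0 z : consistent a beta z -> cinner a z != 0 -> Din z != 0.
Proof.
move=> hc; apply: contra => /eqP D0.
have -> : cinner a z = (complex.Re (cinner a z)) +i* (complex.Im (cinner a z)).
  by case: (cinner a z).
by rewrite cinner_re cinner_im D0 Ein0.
Qed.

Lemma sum_single (F : 'I_n -> R) k : (forall j, j != k -> F j = 0) ->
  \sum_(j < n) F j = F k.
Proof. by move=> h; rewrite (bigD1 k) //= big1 ?addr0 // => j /h. Qed.

Lemma r2_neq0 z k : 0 < beta -> local_min_on_sphere a beta z ->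
  consistent a beta z -> cinner a z != 0 -> r2 z k != 0.
Proof.
move=> bpos lm hc hnz; apply/negP => /eqP r0.
have st := hc.1.
have [zr0 zi0] : re z k = 0 /\ im z k = 0.
  move: r0; rewrite /r2 => r0.
  have h1 := sqr_ge0 (re z k); have h2 := sqr_ge0 (im z k).
  by split; apply/eqP; rewrite -sqrf_eq0; apply/eqP; lra.
have Dnz := @Din_neq0 z hc hnz.
have E0 := @Ein0 z hc.
have [ar0 ai0] : re a k = 0 /\ im a k = 0.
  have s1 := @stat_re z st k; have s2 := @stat_im z st k.
  have h1 : Din z * re a k = 0 by move: s1; rewrite zr0 E0; lra.
  have h2 : Din z * im a k = 0 by move: s2; rewrite zi0 E0; lra.
  by split; apply/eqP; [move/eqP: h1 | move/eqP: h2]; rewrite mulf_eq0 (negPf Dnz).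
pose v := fun j : 'I_n => if j == k then (1 : R[i]) else 0.
have hre : forall j, re v j = (j == k)%:R by move=> j; rewrite /re /v; case: eqP.
have him : forall j, im v j = 0 by move=> j; rewrite /im /v; case: eqP.
have ed : forall j, edot z v j = 0.
  move=> j; rewrite /edot hre him mulr0 addr0.
  by have [->|_] := eqVneq j k; rewrite ?zr0 ?mul0r ?mulr0.
have tang : \sum_(j < n) edot z v j = 0 by rewrite big1.
have := @second_order z v bpos lm st tang.
have Dv : Din v = 0.
  rewrite /Din big1 // => j _; rewrite hre him mulr0 addr0.
  by have [->|_] := eqVneq j k; rewrite ?ar0 ?mul0r ?mulr0.
have Ev : Ein v = 0.
  by rewrite /Ein big1 // => j _; rewrite hre him mulr0 sub0r; 
    have [->|_] := eqVneq j k; rewrite ?ai0 ?mul0r ?mulr0 ?oppr0.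
have Sv : \sum_(j < n) (beta * r2 z j - lam z) * r2 v j = - lam z.
  rewrite (@sum_single _ k); first by rewrite r0 /r2 hre him eqxx /=; ring.
  by move=> j /negPf jk; rewrite /r2 hre him jk /=; ring.
rewrite /Aform Dv Ev Sv big1; last by move=> j _; rewrite ed expr0n.
have : 0 < lam z.
  rewrite /lam; have : 0 < Din z ^+ 2 by rewrite exprn_even_gt0.
  have : 0 <= \sum_(j < n) r2 z j ^+ 2 by apply: sumr_ge0 => j _; exact: sqr_ge0.
  have := sqr_ge0 (Ein z).
  nra.
lra.
Qed.

Lemma psd z w : 0 < beta -> local_min_on_sphere a beta z ->
  consistent a beta z -> cinner a z != 0 ->
  0 <= 2^-1 * (Din w ^+ 2 + Ein w ^+ 2)
       + \sum_(k < n) (beta * r2 z k - lam z) * r2 w k.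
Proof.
move=> bpos lm hc hnz.
have st := hc.1.
pose al := fun k => (re w k * re z k + im w k * im z k) / r2 z k.
pose th := fun k => (im w k * re z k - re w k * im z k) / r2 z k.
pose v1 := fun k => (- (al k * im z k)) +i* (al k * re z k).
pose v2 := fun k => (- (th k * im z k)) +i* (th k * re z k).
have D : forall k, _ := fun k => decomp (re a k) (im a k) (re z k) (im z k)
   (re w k) (im w k) (al k) (th k) (@r2_neq0 z k bpos lm hc hnz)
   (@cons_re z hc k) (erefl _) (erefl _).
have tang1 : \sum_(k < n) edot z v1 k = 0.
  by rewrite big1 // => k _; rewrite /edot /re /im /=; ring.
have tang2 : \sum_(k < n) edot z v2 k = 0.
  by rewrite big1 // => k _; rewrite /edot /re /im /=; ring.
have A1 := @second_order z v1 bpos lm st tang1.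
have A2 := @second_order z v2 bpos lm st tang2.
have e1 : \sum_(k < n) edot z v1 k ^+ 2 = 0.
  by rewrite big1 // => k _; rewrite /edot /re /im /=; ring.
have e2 : \sum_(k < n) edot z v2 k ^+ 2 = 0.
  by rewrite big1 // => k _; rewrite /edot /re /im /=; ring.
have D1 : Din v1 = 0 by rewrite /Din big1 // => k _; case: (D k).
have D2 : Din v2 = 0 by rewrite /Din big1 // => k _; case: (D k).
have E1 : Ein v1 = Din w by rewrite /Ein /Din; apply: eq_bigr => k _; case: (D k) => ->.
have E2 : Ein v2 = Ein w by rewrite /Ein /Din; apply: eq_bigr => k _; case: (D k) => _ ->.
have S : \sum_(k < n) (beta * r2 z k - lam z) * r2 w k =
         \sum_(k < n) (beta * r2 z k - lam z) * r2 v1 k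
         + \sum_(k < n) (beta * r2 z k - lam z) * r2 v2 k.
  rewrite -big_split; apply: eq_bigr => k _.
  by case: (D k) => _ _ _ _ h; rewrite /r2 h /re /im /=; ring.
move: A1 A2; rewrite /Aform D1 D2 E1 E2 e1 e2 S; lra.
Qed.
Lemma sum_lam z w :
  \sum_(k < n) r2 w k = 1 ->
  \sum_(k < n) (beta * r2 z k - lam z) * r2 w k =
  beta * \sum_(k < n) (r2 z k * r2 w k) - lam z.
Proof.
move=> h.
rewrite (eq_bigr (fun k => (r2 z k * r2 w k) * beta + r2 w k * (- lam z))).
  by rewrite sum_lin2 h; ring.
by move=> k _; ring.
Qed.

Lemma main_thm (z y : 'I_n -> R[i]) :
  0 < beta ->
  csphere z -> csphere y ->
  local_min_on_sphere a beta z -> local_min_on_sphere a beta y ->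
  consistent a beta z -> consistent a beta y ->
  cinner a z != 0 -> cinner a y != 0 ->
  forall k : 'I_n, cabs (y k) = cabs (z k).
Proof.
move=> bpos sz sy lz ly cz cy nz ny.
have hz := @psd z y bpos lz cz nz.
have hy := @psd y z bpos ly cy ny.
have sz' : \sum_(k < n) r2 z k = 1 by rewrite -norm2sqE.
have sy' : \sum_(k < n) r2 y k = 1 by rewrite -norm2sqE.
rewrite sum_lam // in hz; rewrite sum_lam // in hy.
move: hz hy; rewrite /lam => hz hy.
have hPQ : \sum_(k < n) (r2 z k * r2 y k) = \sum_(k < n) (r2 y k * r2 z k).
  by apply: eq_bigr => k _; rewrite mulrC.
have hsq : \sum_(k < n) (r2 z k - r2 y k) ^+ 2 =
   \sum_(k < n) r2 z k ^+ 2 + \sum_(k < n) r2 y k ^+ 2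
   - 2 * \sum_(k < n) (r2 z k * r2 y k).
  rewrite (eq_bigr (fun k => r2 z k ^+ 2 * 1 + r2 y k ^+ 2 * 1 + (r2 z k * r2 y k) * (-2))).
    by rewrite sum_lin3; ring.
  by move=> k _; ring.
have ge : 0 <= \sum_(k < n) (r2 z k - r2 y k) ^+ 2.
  by apply: sumr_ge0 => k _; exact: sqr_ge0.
have le : \sum_(k < n) (r2 z k - r2 y k) ^+ 2 <= 0.
  rewrite hsq; rewrite hPQ in hz.
  have : 0 <= beta * (2 * \sum_(k < n) (r2 y k * r2 z k)
          - \sum_(k < n) r2 z k ^+ 2 - \sum_(k < n) r2 y k ^+ 2) by lra.
  rewrite pmulr_rge0 // -hPQ; lra.
have eq0 : \sum_(k < n) (r2 z k - r2 y k) ^+ 2 = 0 by lra.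
move=> k.
have := psumr_eq0P (fun i _ => sqr_ge0 (r2 z i - r2 y i)) eq0 (i := k) isT.
move/eqP; rewrite sqrf_eq0 subr_eq0 => /eqP h.
apply/eqP; rewrite -(@eqrXn2 _ 2) // ?cabs_ge0 // !cabs2.
by move: h; rewrite /r2 /re /im => ->.
Qed.
End Real.

Local Close Scope complex_scope.

Theorem theorem10 (R : realType) (n : nat) (a : 'I_n -> R[i]) (beta : R)
  (z y : 'I_n -> R[i]) :
  0 < beta ->
  csphere z -> csphere y ->
  local_min_on_sphere a beta z -> local_min_on_sphere a beta y ->
  consistent a beta z -> consistent a beta y ->
  cinner a z != 0 -> cinner a y != 0 ->
  forall k : 'I_n, cabs (y k) = cabs (z k).
Proof. exact: main_thm. Qed.
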